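(* Consider Method 2.4 (described in the context), with a fixed $\varepsilon>0$, and suppose it does not terminate and the numbers $\delta_k>0$ satisfy $\delta_k\to0$. Then the sequences $\{x_k\},\{\sigma_k\}$ are defined for all $k\in K$ and $\lim_{k\to\infty}g(x_k)=f^*+\varepsilon$, $\lim_{k\to\infty}\sigma_k=f^*+\varepsilon$, where $g(x)=f(x)+\varepsilon$.
   Context: Setting: $D\subset\mathbb{R}^n$ closed convex; $f$ convex on $\mathbb{R}^n$ attaining its minimum $f^*$ on $D$; $X^*=\{x\in D:f(x)=f^*\}$; fixed $\varepsilon>0$, $g(x)=f(x)+\varepsilon$, $g^*=\min_Dg=f^*+\varepsilon$; $\operatorname{epi}(g,\mathbb{R}^n)=\{(x,\gamma):\gamma\ge g(x)\}$; $W^1(u,Q)=\{a\in\mathbb{R}^{n+1}:\|a\|=1,\ \langle a,v-u\rangle\le0\ \forall v\in Q\}$; $K=\{0,1,\dots\}$; $J=\{1,\dots,m\}$. Method 2.4: fix $x^*\in X^*$; choose $v^j\in\operatorname{int}\operatorname{epi}(g,\mathbb{R}^n)$, $j\in J$, a closed convex bounded $G_0\subset D$ with $x^*\in G_0$, a closed convex $M_0\subseteq\mathbb{R}^{n+1}$ with $\operatorname{epi}(g,\mathbb{R}^n)\subset M_0$, numbers $\delta_0>0$, $\bar\gamma_0\le g^*$, constant $q\ge1$; $i=k=0$. Step 1: $u_i=(y_i,\gamma_i)$ solves $\min\{\gamma:(x,\gamma)\in M_i,\ x\in G_i,\ \gamma\ge\bar\gamma_i\}$; if $\gamma_i=g(y_i)$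 stop. Step 2: for each $j\in J$ choose $\bar u_i^j$ in the open segment $(v^j,u_i)$ with $\bar u_i^j\notin\operatorname{int}\operatorname{epi}(g,\mathbb{R}^n)$ and $u_i+q_i^j(\bar u_i^j-u_i)\in\operatorname{epi}(g,\mathbb{R}^n)$ for some $q_i^j\in[1,q]$. Step 3: if $\|\bar u_i^j-u_i\|>\delta_k$ for all $j\in J$, choose closed convex $Q_i\subseteq M_i$ with $\operatorname{epi}(g,\mathbb{R}^n)\subset Q_i$ and go to Step 5. Step 4: choose closed convex $Q_i\supseteq\operatorname{epi}(g,\mathbb{R}^n)$; set $i_k=i$, $\sigma_k=\gamma_{i_k}$; choose $x_k\in G_{i_k}$ with $g(x_k)\le g(y_{i_k})$; choose $\delta_{k+1}>0$; $k\leftarrow k+1$. Step 5: for $j\in J$ choose nonempty finite $A_i^j\subset W^1(\bar u_i^j,\operatorname{epi}(g,\mathbb{R}^n))$; $M_{i+1}=Q_i\cap\bigcap_{j\in J}\{u\in\mathbb{R}^{n+1}:\langle a,u-\bar u_i^j\rangle\le0\ \forall a\in A_i^j\}$. Step 6: choose closed convex $G_{i+1}\subseteq G_0$ with $x^*\in G_{i+1}$ and $\bar\gamma_{i+1}\in[\bar\gamma_0,g^*]$; $i\leftarrow i+1$; go to Step 1. *)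

(* Defs.v *)
From HB Require Import structures.
From mathcomp Require Import all_boot all_order all_algebra.
From mathcomp Require Import all_classical all_reals all_analysis.
Set Implicit Arguments. Unset Strict Implicit. Unset Printing Implicit Defensive.
Import Order.TTheory GRing.Theory Num.Theory.
Import numFieldNormedType.Exports.
Local Open Scope classical_set_scope.
Local Open Scope ring_scope.

(* R^n is 'rV[R]_n ; R^{n+1} is represented as pairs (x, gamma) : 'rV[R]_n * R *)
Definition pt (R : realType) (n : nat) := ('rV[R]_n * R)%type.

Definition dotp (R : realType) (n : nat) (a b : pt R n) : R :=
  \sum_(i < n) a.1 ord0 i * b.1 ord0 i + a.2 * b.2.
Definition psub (R : realType) (n : nat) (a b : pt R n) : pt R n :=
  (a.1 - b.1, a.2 - b.2).
Definition pnorm (R : realType) (n : nat) (a : pt R n) : R :=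
  Num.sqrt (dotp a a).

Definition convex_setR (R : realType) (n : nat) (A : set 'rV[R]_n) : Prop :=
  forall x y t, A x -> A y -> 0 <= t <= 1 -> A (t *: x + (1 - t) *: y).
Definition convex_setP (R : realType) (n : nat) (A : set (pt R n)) : Prop :=
  forall p p' t, A p -> A p' -> 0 <= t <= 1 ->
    A (t *: p.1 + (1 - t) *: p'.1, t * p.2 + (1 - t) * p'.2).
Definition convex_fun (R : realType) (n : nat) (f : 'rV[R]_n -> R) : Prop :=
  forall x y t, 0 <= t <= 1 ->
    f (t *: x + (1 - t) *: y) <= t * f x + (1 - t) * f y.

Definition bounded_rV (R : realType) (n : nat) (A : set 'rV[R]_n) : Prop :=
  exists r : R, forall x, A x -> `|x| <= r.

Definition epi (R : realType) (n : nat) (g : 'rV[R]_n -> R) : set (pt R n) :=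
  [set p | g p.1 <= p.2].

Definition W1 (R : realType) (n : nat) (u : pt R n) (Q : set (pt R n)) : set (pt R n) :=
  [set a | pnorm a = 1 /\ forall v, Q v -> dotp a (psub v u) <= 0].

Definition pcomb (R : realType) (n : nat) (u w : pt R n) (t : R) : pt R n :=
  (u.1 + t *: (w.1 - u.1), u.2 + t * (w.2 - u.2)).

(* A non-terminating run of Method 2.4 applied to g = f + eps on D, with
   fixed x* = xs.  Iterations are indexed by i; the counter k at the start of
   iteration i is kk i.  Step 4 is executed at iteration i exactly when
   step4 i holds, i.e. some j has ||ubar_i^j - u_i|| <= delta_{kk i}.
   In that case i_{kk i} = i, sigma_{kk i} = gamma_i and x_{kk i} is chosen. *)
Definition method24_run (R : realType) (n : nat)
  (D : set 'rV[R]_n) (g : 'rV[R]_n -> R) (gstar : R) (xs : 'rV[R]_n)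
  (m : nat) (v : 'I_m -> pt R n) (q : R)
  (G : nat -> set 'rV[R]_n) (M : nat -> set (pt R n)) (delta : nat -> R)
  (gbar : nat -> R) (u : nat -> pt R n) (ubar : nat -> 'I_m -> pt R n)
  (qq : nat -> 'I_m -> R) (Q : nat -> set (pt R n))
  (A : nat -> 'I_m -> seq (pt R n)) (kk : nat -> nat)
  (x : nat -> 'rV[R]_n) (sigma : nat -> R) : Prop :=
  let E := epi g in
  let step4 i := exists j, pnorm (psub (ubar i j) (u i)) <= delta (kk i) in
  (forall j, (interior E) (v j)) /\
  closed (G 0) /\ convex_setR (G 0) /\ bounded_rV (G 0) /\ G 0 `<=` D /\ G 0 xs /\
  closed (M 0) /\ convex_setP (M 0) /\ E `<=` M 0 /\
  0 < delta 0 /\ gbar 0 <= gstar /\ 1 <= q /\ kk 0 = 0%N /\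
  (forall i,
    (* Step 1: u_i solves the auxiliary problem, and no stop *)
    [/\ M i (u i), G i (u i).1, gbar i <= (u i).2,
        (forall p, M i p -> G i p.1 -> gbar i <= p.2 -> (u i).2 <= p.2)
      & (u i).2 <> g (u i).1] /\
    (forall j, (exists t, 0 < t < 1 /\ ubar i j = pcomb (v j) (u i) t) /\
       ~ (interior E) (ubar i j) /\
       1 <= qq i j <= q /\ E (pcomb (u i) (ubar i j) (qq i j))) /\
    closed (Q i) /\ convex_setP (Q i) /\ E `<=` Q i /\
    (~ step4 i -> Q i `<=` M i /\ kk i.+1 = kk i) /\
    (step4 i -> sigma (kk i) = (u i).2 /\ G i (x (kk i)) /\
                g (x (kk i)) <= g (u i).1 /\ 0 < delta (kk i).+1 /\
                kk i.+1 = (kk i).+1) /\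
    (forall j, A i j != [::] /\ forall a, a \in A i j -> W1 (ubar i j) E a) /\
    M i.+1 = Q i `&` [set p | forall j a, a \in A i j ->
                                dotp a (psub p (ubar i j)) <= 0] /\
    closed (G i.+1) /\ convex_setR (G i.+1) /\ G i.+1 `<=` G 0 /\ G i.+1 xs /\
    gbar 0 <= gbar i.+1 <= gstar).

(* Main.v *)
Require Import Defs.
Set Implicit Arguments. Unset Strict Implicit.
From HB Require Import structures.
From mathcomp Require Import all_boot all_order all_algebra.
From mathcomp Require Import all_classical all_reals all_analysis.
Import Order.TTheory GRing.Theory Num.Theory.
Import numFieldNormedType.Exports.
Local Open Scope classical_set_scope.
Local Open Scope ring_scope.
From mathcomp Require Import ring lra zify.
Section Coords.
Variables (R : realType) (n : nat).
Implicit Types (p a b : pt R n).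

Definition crd p (k : 'I_n.+1) : R :=
  match unlift ord_max k with Some i => p.1 ord0 i | None => p.2 end.

Lemma crd_lift p (i : 'I_n) : crd p (lift ord_max i) = p.1 ord0 i.
Proof. by rewrite /crd liftK. Qed.

Lemma crd_max p : crd p ord_max = p.2.
Proof. by rewrite /crd unlift_none. Qed.

Lemma dotpE a b : dotp a b = \sum_k crd a k * crd b k.
Proof.
rewrite big_ord_recr /= !crd_max /dotp; congr (_ + _).
apply: eq_bigr => i _.
have -> : widen_ord (leqnSn n) i = lift ord_max i by by apply/val_inj; rewrite /= /bump leqNgt ltn_ord.
by rewrite !crd_lift.
Qed.

Lemma crd_psub a b k : crd (psub a b) k = crd a k - crd b k.
Proof. rewrite /crd; by case: (unlift ord_max k) => [i|] //=; rewrite !mxE. Qed.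

Lemma crd_pcomb a b t k : crd (pcomb a b t) k = crd a k + t * (crd b k - crd a k).
Proof. by rewrite /crd; case: (unlift ord_max k) => [i|] //=; rewrite !mxE. Qed.

Lemma dotp_ge0 a : 0 <= dotp a a.
Proof. by rewrite dotpE; apply: sumr_ge0 => k _; rewrite -expr2 sqr_ge0. Qed.

Lemma crd_le_pnorm p k : `|crd p k| <= pnorm p.
Proof.
rewrite /pnorm -sqrtr_sqr ler_sqrt ?dotp_ge0 // dotpE (bigD1 k) //= -expr2.
by rewrite lerDl; apply: sumr_ge0 => i _; rewrite -expr2 sqr_ge0.
Qed.

Lemma pnorm_le p (r : R) : (forall k, `|crd p k| <= r) -> pnorm p <= n.+1%:R * r.
Proof.
move=> H; have r0 : 0 <= r by apply: le_trans (H ord0).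
rewrite /pnorm -[X in _ <= X]ger0_norm ?mulr_ge0 // -sqrtr_sqr ler_sqrt ?sqr_ge0 //.
rewrite dotpE (le_trans (y := \sum_(k < n.+1) r ^+ 2)) //.
  apply: ler_sum => k _; rewrite -expr2 -real_normK ?num_real //.
  by rewrite lerXn2r ?nnegrE ?normr_ge0.
rewrite sumr_const card_ord exprMn -[_ *+ n.+1]mulr_natl ler_wpM2r ?sqr_ge0 //.
by rewrite -natrX ler_nat expnS leq_pmulr ?expn_gt0.
Qed.

Lemma dotp_le a b (r : R) : (forall k, `|crd a k| <= 1) -> (forall k, `|crd b k| <= r) ->
  dotp a b <= n.+1%:R * r.
Proof.
move=> Ha Hb; rewrite dotpE; apply: (le_trans (y := \sum_(k < n.+1) r)).
  apply: ler_sum => k _; apply: le_trans (ler_norm _) _; rewrite normrM.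
  by rewrite -[r]mul1r ler_pM ?normr_ge0.
by rewrite sumr_const card_ord mulr_natl.
Qed.

Lemma pnorm1 a : pnorm a = 1 -> dotp a a = 1.
Proof. by move=> H; rewrite -(sqr_sqrtr (dotp_ge0 a)) -/(pnorm a) H expr1n. Qed.

Lemma pnorm1_crd a : pnorm a = 1 -> forall k, `|crd a k| <= 1.
Proof. by move=> H k; rewrite -H crd_le_pnorm. Qed.

Lemma interior_crd (S : set (pt R n)) v : interior S v ->
  exists2 r, 0 < r & forall p, (forall k, `|crd p k - crd v k| < r) -> S p.
Proof.
move=> /nbhs_ballP [e e0 H]; exists e => // p Hp; apply: H; split => /=.
  rewrite mx_norm_ball /ball_ /=; rewrite [X in X < _]/Num.Def.normr /= mx_normrE.
  apply: bigmax_lt => // -[i j] _ /=; rewrite (ord1 i) !mxE.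
  by rewrite -!crd_lift distrC Hp.
by rewrite /ball /= -!crd_max distrC Hp.
Qed.

Definition mkpt (c : 'I_n.+1 -> R) : pt R n := (\row_i c (lift ord_max i), c ord_max).

Lemma crd_mkpt c k : crd (mkpt c) k = c k.
Proof.
case: (unliftP ord_max k) => [j ->|->]; last by rewrite crd_max.
by rewrite crd_lift mxE.
Qed.

Lemma crd_cases (P : 'I_n.+1 -> Prop) : (forall i : 'I_n, P (lift ord_max i)) -> P ord_max -> forall k, P k.
Proof. by move=> H1 H2 k; case: (unliftP ord_max k) => [j ->|->]. Qed.

End Coords.

Lemma mx_entry_le (R : realType) n (x : 'rV[R]_n) i : `|x ord0 i| <= `|x|.
Proof.
rewrite [X in _ <= X]/Num.Def.normr /= mx_normrE.
exact: (le_bigmax 0 (fun ij : 'I_1 * 'I_n => `|x ij.1 ij.2|) (ord0, i)).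
Qed.

Lemma mx_norm_le (R : realType) n (x : 'rV[R]_n) r : 0 <= r ->
  (forall i, `|x ord0 i| <= r) -> `|x| <= r.
Proof.
move=> r0 H; rewrite [X in X <= _]/Num.Def.normr /= mx_normrE.
by apply: bigmax_le => // -[i j] _ /=; rewrite (ord1 i).
Qed.
Section Conv.
Variables (R : realType) (n : nat) (f : 'rV[R]_n -> R).
Hypothesis cf : convex_fun f.

Lemma conv_seg (e : 'rV[R]_n) (c s : R) : 0 < c -> `|s| <= c ->
  f (s *: e) <= Num.max (f (c *: e)) (f ((- c) *: e)).
Proof.
move=> c0 hs; set t := (s + c) / (2 * c).
have t01 : 0 <= t <= 1.
  move: hs; rewrite ler_norml => /andP[h1 h2].
  rewrite /t; apply/andP; split.
    by apply: divr_ge0; lra.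
  by rewrite ler_pdivrMr ?mulr_gt0 //; lra.
have -> : s *: e = t *: (c *: e) + (1 - t) *: ((- c) *: e).
  rewrite !scalerA -scalerDl; congr (_ *: _); rewrite /t; field.
  by rewrite gt_eqF.
apply: le_trans (cf _ _ t01) _.
move: t01 => /andP[t0 t1].
set M := Num.max _ _.
have h1 : f (c *: e) <= M by rewrite le_max lexx.
have h2 : f ((- c) *: e) <= M by rewrite le_max lexx orbT.
have : t * f (c *: e) <= t * M by rewrite ler_wpM2l.
have : (1 - t) * f ((- c) *: e) <= (1 - t) * M by rewrite ler_wpM2l // subr_ge0.
lra.
Qed.

Lemma UB_aux k (r : R) : exists M, forall x : 'rV[R]_n,
  (forall i, `|x ord0 i| <= r) -> (forall i : 'I_n, (k <= i)%N -> x ord0 i = 0) ->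
  f x <= M.
Proof.
elim: k r => [|k IH] r.
  exists (f 0) => x _ H; suff -> : x = 0 by [].
  by apply/rowP => i; rewrite mxE H.
case: (leqP n k) => hk.
  have [M HM] := IH r; exists M => x H1 H2; apply: HM => // i hi.
  apply: H2; rewrite ltn_neqAle hi andbT; apply/eqP => ei.
  by move: (ltn_ord i); rewrite -ei ltnNge hk.
pose ik : 'I_n := Ordinal hk.
pose e : 'rV[R]_n := delta_mx 0 ik.
have [M1 HM1] := IH (2 * r).
set c := 2 * (`|r| + 1).
have c0 : 0 < c by rewrite /c mulr_gt0 // ltr_pwDr ?normr_ge0.
exists ((M1 + Num.max (f (c *: e)) (f ((- c) *: e))) / 2) => x H1 H2.
have r0 : 0 <= r by apply: le_trans (H1 ik).
have [x' ex'] : exists x' : 'rV[R]_n, forall i, x' ord0 i = if i == ik then 0 else x ord0 i.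
  exists (x - (x ord0 ik) *: e) => i.
  rewrite !mxE /=; case: eqP => [->|_]; first by rewrite mulr1 subrr.
  by rewrite mulr0 subr0.
have -> : x = 2^-1 *: (2 *: x') + (1 - 2^-1) *: ((2 * x ord0 ik) *: e).
  apply/rowP => i; rewrite !mxE ex' /=.
  by case: eqP => [->|_] /=; rewrite ?mulr1 ?mulr0; field.
have h2 : 0 <= (2^-1 : R) <= 1 by apply/andP; split; lra.
apply: le_trans (cf _ _ h2) _.
have A1 : f (2 *: x') <= M1.
  apply: HM1 => i; rewrite mxE ex'.
    case: eqP => _; first by rewrite mulr0 normr0 mulr_ge0.
    by rewrite normrM ger0_norm // ler_wpM2l.
  move=> hi; case: eqP => [_|ne]; first by rewrite mulr0.
  rewrite H2 ?mulr0 //; rewrite ltn_neqAle hi andbT; apply/eqP => ei.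
  by apply: ne; apply/val_inj.
have A2 : f ((2 * x ord0 ik) *: e) <= Num.max (f (c *: e)) (f ((- c) *: e)).
  apply: conv_seg => //; rewrite normrM ger0_norm // /c ler_wpM2l //.
  by apply: le_trans (H1 ik) _; rewrite (le_trans (ler_norm r)) // lerDl.
lra.
Qed.

Lemma UB (r : R) : exists M, forall x : 'rV[R]_n, `|x| <= r -> f x <= M.
Proof.
have [M HM] := UB_aux n r; exists M => x hx; apply: HM.
  by move=> i; apply: le_trans (mx_entry_le x i) hx.
by move=> i hi; move: (ltn_ord i); rewrite ltnNge hi.
Qed.

Lemma LIP (B : R) : exists2 L, 0 <= L & forall y z : 'rV[R]_n,
  `|y| <= B -> `|y - z| <= 1 -> f y <= f z + L * `|y - z|.
Proof.
have [M HM] := UB (B + 1).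
set mn := 2 * f 0 - M.
exists `|M - mn|; first exact: normr_ge0.
move=> y z hy hyz.
have hz : `|z| <= B + 1.
  have -> : z = y - (y - z) by rewrite opprB addrC subrK.
  by apply: le_trans (ler_normB _ _) _; apply: lerD.
have lowz : mn <= f z.
  have h2 : 0 <= (2^-1 : R) <= 1 by apply/andP; split; lra.
  have := cf z (- z) h2.
  have -> : 2^-1 *: z + (1 - 2^-1) *: - z = 0 :> 'rV[R]_n.
    by apply/rowP => i; rewrite !mxE; field.
  have := HM (- z); rewrite normrN => /(_ hz) hm.
  rewrite /mn; lra.
case: (eqVneq (y - z) 0) => [/eqP|ne].
  by rewrite subr_eq0 => /eqP ->; rewrite subrr normr0 mulr0 addr0.
set d := `|y - z|.
have d0 : 0 < d by rewrite normr_gt0.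
pose p := y + d^-1 *: (y - z).
have hp : `|p| <= B + 1.
  apply: le_trans (ler_normD _ _) _; apply: lerD => //.
  rewrite normrZ ger0_norm; first by rewrite -/d mulVf ?gt_eqF.
  by rewrite invr_ge0 ltW.
set lam := d / (1 + d).
have l01 : 0 <= lam <= 1.
  rewrite /lam; apply/andP; split; first by rewrite divr_ge0 //; lra.
  by rewrite ler_pdivrMr; lra.
have -> : y = lam *: p + (1 - lam) *: z.
  have nd : d != 0 by rewrite gt_eqF.
  have nd1 : 1 + d != 0 by rewrite gt_eqF //; lra.
  by apply/rowP => i; rewrite /p /lam !mxE; field; rewrite nd nd1.
apply: le_trans (cf _ _ l01) _.
have fp : f p <= M by exact: HM.
have lamd : lam <= d.
  by rewrite /lam ler_pdivrMr; [nra | lra].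
have hL : f p - f z <= `|M - mn| by apply: le_trans (ler_norm _); lra.
have lam0 : 0 <= lam by case/andP: l01.
have : lam * (f p - f z) <= lam * `|M - mn| by rewrite ler_wpM2l.
have : lam * `|M - mn| <= d * `|M - mn| by rewrite ler_wpM2r ?normr_ge0.
rewrite [`|M - mn| * d]mulrC; nra.
Qed.
End Conv.
Lemma floor_close (R : realType) (x y : R) : Num.floor x = Num.floor y -> `|x - y| < 1.
Proof.
move=> e; have := floor_itv x; have := floor_itv y; rewrite e.
set a := (Num.floor y)%:~R; set b := ((Num.floor y) + 1)%:~R.
have -> : b = a + 1 by rewrite /b /a rmorphD.
move=> /andP[h1 h2] /andP[h3 h4]; rewrite ltr_norml; apply/andP; split; lra.
Qed.

Lemma PH (R : realType) (N : nat) (P : nat -> 'I_N -> R) (B rho : R) :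
  0 < rho -> (forall l k, `|P l k| <= B) ->
  exists l1 l2, (l1 < l2)%N /\ forall k, `|P l1 k - P l2 k| < rho.
Proof.
move=> h0 HB.
pose K := (`|Num.floor (2 * B / rho)|%N).+1.
pose fl l k := Num.floor ((P l k + B) / rho).
have PB l k : 0 <= P l k + B <= 2 * B.
  by move: (HB l k); rewrite ler_norml => /andP[h1 h2]; apply/andP; split; lra.
have fl0 l k : 0 <= fl l k.
  rewrite floor_ge0; apply: divr_ge0; last exact: ltW.
  by case/andP: (PB l k).
have flK l k : (`|fl l k|%N < K)%N.
  have [p1 p2] := andP (PB l k).
  rewrite ltnS -lez_nat !gez0_abs ?floor_ge0 //.
  - by apply: le_floor; rewrite ler_pM2r ?invr_gt0.
  - by apply: divr_ge0; [lra | apply: ltW].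
  - by apply: divr_ge0; [lra | apply: ltW].
pose F (i : 'I_(#|{ffun 'I_N -> 'I_K}|).+1) : {ffun 'I_N -> 'I_K} :=
  [ffun k => inord (`|fl i k|%N)].
have [[i1 [i2 [ne e]]] | nex] :=
  pselect (exists i1 i2, i1 != i2 /\ F i1 = F i2); last first.
  have injF : injective F.
    move=> a b e; case: (eqVneq a b) => // ne; exfalso; apply: nex.
    by exists a, b.
  by have := leq_card F injF; rewrite card_ord ltnn.
have close k : `|P i1 k - P i2 k| < rho.
  have := congr1 (fun g : {ffun 'I_N -> 'I_K} => val (g k)) e; rewrite /F !ffunE /= !inordK //.
  move=> /(congr1 Posz); rewrite !gez0_abs // => /floor_close h.
  have -> : P i1 k - P i2 k = ((P i1 k + B) / rho - (P i2 k + B) / rho) * rho.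
    by field; rewrite gt_eqF.
  by rewrite normrM (gtr0_norm h0) -[X in _ < X]mul1r ltr_pM2r.
case: (ltngtP i1 i2) => h.
- by exists i1, i2.
- by exists i2, i1; split => // k; rewrite distrC.
- by move: ne; rewrite (val_inj h) eqxx.
Qed.
Unset Implicit Arguments.
Theorem theorem2p4p3 (R : realType) (n : nat)
  (D : set 'rV[R]_n) (f : 'rV[R]_n -> R) (xs : 'rV[R]_n) (eps : R)
  (m : nat) (v : 'I_m -> pt R n) (q : R)
  (G : nat -> set 'rV[R]_n) (M : nat -> set (pt R n)) (delta : nat -> R)
  (gbar : nat -> R) (u : nat -> pt R n) (ubar : nat -> 'I_m -> pt R n)
  (qq : nat -> 'I_m -> R) (Q : nat -> set (pt R n))
  (A : nat -> 'I_m -> seq (pt R n)) (kk : nat -> nat)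
  (x : nat -> 'rV[R]_n) (sigma : nat -> R) :
  closed D -> convex_setR D -> convex_fun f ->
  D xs -> (forall y, D y -> f xs <= f y) ->
  0 < eps -> (0 < m)%N ->
  method24_run D (fun y => f y + eps) (f xs + eps) xs v q G M delta gbar u ubar
    qq Q A kk x sigma ->
  (forall k, 0 < delta k) -> delta @ \oo --> 0 ->
  (forall k, exists i, kk i = k /\
     exists j, pnorm (psub (ubar i j) (u i)) <= delta (kk i)) /\
  (fun k => f (x k) + eps) @ \oo --> f xs + eps /\
  sigma @ \oo --> f xs + eps.
Proof.
move=> Dc Dcv fcv Dxs fmin eps0 m0 Hrun dpos dcv.
set gs := f xs + eps.
set E := epi (fun y => f y + eps).
set step4 := fun i => exists j, pnorm (psub (ubar i j) (u i)) <= delta (kk i).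
have [Hv [HG0c [HG0cv [HG0b [HG0D [HG0x [HM0c [HM0cv [HEM0 [Hd0 [Hgb0 [Hq [Hkk0 Hit]]]]]]]]]]]]] := Hrun.
have F_EM i : E `<=` M i.
  elim: i => [|i IH] p Ep; first exact: HEM0.
  have [_ [_ [_ [_ [EQ [_ [_ [HA [HM1 _]]]]]]]]] := Hit i.
  rewrite HM1; split; first exact: EQ.
  by move=> j a ain; have [_ Ha] := HA j; exact: (proj2 (Ha a ain)) p Ep.
have F_G i : G i `<=` G 0.
  case: i => [//|i]; by have [_ [_ [_ [_ [_ [_ [_ [_ [_ [_ [_ [GG0 _]]]]]]]]]]]] := Hit i.
have F_Gxs i : G i xs.
  case: i => [//|i]; by have [_ [_ [_ [_ [_ [_ [_ [_ [_ [_ [_ [_ [Gx _]]]]]]]]]]]]] := Hit i.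
have F_gb i : gbar 0 <= gbar i <= gs.
  case: i => [|i]; first by rewrite lexx Hgb0.
  by have [_ [_ [_ [_ [_ [_ [_ [_ [_ [_ [_ [_ [_ Hg]]]]]]]]]]]]] := Hit i.
have F_u2 i : gbar 0 <= (u i).2 <= gs.
  have [[Mu Gu gbu umin uneq] _] := Hit i.
  have /andP[g1 g2] := F_gb i.
  apply/andP; split; first exact: le_trans gbu.
  apply: (umin (xs, gs)) => //=; apply: F_EM; rewrite /E /epi /=; exact: lexx.
have F_uD i : D (u i).1.
  by have [[Mu Gu _ _ _] _] := Hit i; exact: HG0D _ (F_G i _ Gu).
have F_g y : D y -> gs <= f y + eps by move=> Dy; rewrite lerD2r fmin.
have [r0 Hr0] := HG0b.
have F_u1 i : `|(u i).1| <= r0.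
  by have [[Mu Gu _ _ _] _] := Hit i; exact: Hr0 _ (F_G i _ Gu).
set Bu := `|r0| + (`|gbar 0| + `|gs|).
have F_Bu i k : `|crd (u i) k| <= Bu.
  move: k; apply: crd_cases => [j|].
    rewrite crd_lift; apply: le_trans (mx_entry_le _ _) _.
    apply: le_trans (F_u1 i) _; apply: le_trans (ler_norm r0) _.
    by rewrite lerDl addr_ge0.
  rewrite crd_max; have /andP[h1 h2] := F_u2 i.
  have := ler_norm gs; have := ler_normr (gbar 0); have := normr_ge0 r0.
  have := normr_ge0 gs; have := normr_ge0 (gbar 0).
  rewrite ler_norml /Bu; move=> *; apply/andP; split.
    have := ler_norm (- gbar 0); rewrite normrN; lra.
  lra.
have Hit_n4 i : ~ step4 i -> M i.+1 `<=` M i /\ kk i.+1 = kk i.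
  have [_ [_ [_ [_ [_ [Hn4 [_ [_ [HM1 _]]]]]]]]] := Hit i.
  move=> ns; have [QM ek] := Hn4 ns; split => // p.
  by rewrite HM1 => -[Qp _]; exact: QM.
have Hit_4 i : step4 i -> kk i.+1 = (kk i).+1.
  have [_ [_ [_ [_ [_ [_ [H4 _]]]]]]] := Hit i.
  by move=> s4; have [_ [_ [_ [_ ->]]]] := H4 s4.
have INF i0 : exists i, (i0 <= i)%N /\ step4 i.
  case: (pselect (exists i, (i0 <= i)%N /\ step4 i)) => // Hno; exfalso.
  have Hno' i : (i0 <= i)%N -> ~ step4 i by move=> hi h; apply: Hno; exists i.
  have kconst l : kk (i0 + l)%N = kk i0.
    elim: l => [|l IH]; first by rewrite addn0.
    by rewrite addnS (proj2 (Hit_n4 _ (Hno' _ (leq_addr _ _)))) IH.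
  set dl := delta (kk i0).
  have dl0 : 0 < dl by apply: dpos.
  have Msub d l : M (i0 + l + d)%N.+1 `<=` M (i0 + l)%N.+1.
    elim: d => [|d IH]; first by rewrite addn0.
    rewrite addnS => p Mp; apply: IH.
    have hle : (i0 <= (i0 + l + d).+1)%N by rewrite -addnA; apply/leqW/leq_addr.
    exact: (proj1 (Hit_n4 _ (Hno' _ hle))).
  pose j0 : 'I_m := Ordinal m0.
  set V := v j0.
  have [rv rv0 Hball] := interior_crd (Hv j0).
  set W := Bu + pnorm V + 1.
  have pV0 : 0 <= pnorm V by apply: sqrtr_ge0.
  have Bu0 : 0 <= Bu by apply: le_trans (F_Bu 0%N ord0); apply: normr_ge0.
  have W0 : 0 < W by rewrite /W; lra.
  set c := dl / (n.+1%:R * W) * (rv / 2).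
  have c0 : 0 < c by rewrite /c !mulr_gt0 ?invr_gt0 ?mulr_gt0 ?ltr0n //; lra.
  have SEP l l' : (l < l')%N -> exists a, pnorm a = 1 /\
      c <= dotp a (psub (u (i0 + l)%N) (u (i0 + l')%N)).
    move=> hll.
    have [_ [H2 [_ [_ [_ [_ [_ [HA [HM1 _]]]]]]]]] := Hit (i0 + l)%N.
    have [[t [/andP[t0 t1] ubE]] _] := H2 j0.
    have [Ane Ha] := HA j0.
    move: Ane Ha; case Aeq: (A (i0 + l)%N j0) => [//|a s] _ Ha.
    have ain : a \in A (i0 + l)%N j0 by rewrite Aeq mem_head.
    have [a1 aE] := Ha a (mem_head a s).
    exists a; split => //.
    set U := u (i0 + l)%N; set Ub := ubar (i0 + l)%N j0.
    have crdUb k : crd Ub k = crd V k + t * (crd U k - crd V k).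
      by rewrite /Ub ubE crd_pcomb.
    set S := \sum_k crd a k * (crd U k - crd V k).
    have hS : rv / 2 <= t * S.
      pose p := mkpt (fun k => crd V k + rv / 2 * crd a k).
      have Ep : E p.
        apply: Hball => k; rewrite crd_mkpt.
        have -> : crd V k + rv / 2 * crd a k - crd V k = rv / 2 * crd a k by ring.
        rewrite normrM (ger0_norm (x := rv / 2)); last by lra.
        apply: le_lt_trans (ler_wpM2l _ (pnorm1_crd a1 k)) _; lra.
      have := aE p Ep.
      have -> : dotp a (psub p Ub) = rv / 2 * dotp a a - t * S.
        rewrite !dotpE /S !mulr_sumr -sumrB; apply: eq_bigr => k _.
        by rewrite crd_psub crd_mkpt crdUb; ring.
      rewrite pnorm1 //; lra.
    have Spos : 0 < S.
      rewrite ltNge; apply/negP => hs.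
      have : t * S <= 0 by rewrite mulr_ge0_le0 // ltW.
      lra.
    have St : rv / 2 <= S.
      have := ler_piMl (ltW Spos) (ltW t1); lra.
    have ns4 : ~ step4 (i0 + l)%N by apply: Hno'; apply: leq_addr.
    have hdl : dl < pnorm (psub Ub U).
      rewrite ltNge; apply/negP => h; apply: ns4; exists j0.
      by rewrite kconst.
    have hpn : pnorm (psub Ub U) <= n.+1%:R * ((1 - t) * W).
      apply: pnorm_le => k; rewrite crd_psub crdUb.
      have -> : crd V k + t * (crd U k - crd V k) - crd U k = (1 - t) * (crd V k - crd U k) by ring.
      rewrite normrM ger0_norm; last by lra.
      apply: ler_wpM2l; first by lra.
      apply: le_trans (ler_normB _ _) _.
      have := crd_le_pnorm V k; have := F_Bu (i0 + l)%N k; rewrite /W; lra.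
    have ht : dl / (n.+1%:R * W) <= 1 - t.
      rewrite ler_pdivrMr; last by rewrite mulr_gt0 // ltr0n.
      have := lt_le_trans hdl hpn; rewrite mulrCA mulrC; lra.
    have hU' : dotp a (psub (u (i0 + l')%N) Ub) <= 0.
      have [[Mu' _ _ _ _] _] := Hit (i0 + l')%N.
      have e' : (i0 + l')%N = (i0 + l + (l' - l.+1)).+1 by rewrite -addnA -addnS -addSn subnKC.
      move: Mu'; rewrite e' => /Msub; rewrite HM1 => -[_ H].
      exact: H j0 a ain.
    have -> : dotp a (psub U (u (i0 + l')%N)) = (1 - t) * S - dotp a (psub (u (i0 + l')%N) Ub).
      rewrite !dotpE /S mulr_sumr -sumrB; apply: eq_bigr => k _.
      by rewrite !crd_psub crdUb; ring.
    have : dl / (n.+1%:R * W) * (rv / 2) <= (1 - t) * S.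
      apply: ler_pM => //; last by lra.
      by apply: divr_ge0; [lra | rewrite mulr_ge0 // ?ler0n; lra].
    by move=> h; rewrite -[c]subr0; apply: lerB.
  have hrho : 0 < c / (2 * n.+1%:R) by rewrite mulr_gt0 // invr_gt0 mulr_gt0 // ltr0n.
  have [l1 [l2 [hl cl]]] := @PH R n.+1 (fun l k => crd (u (i0 + l)%N) k) Bu (c / (2 * n.+1%:R))
    hrho (fun l k => F_Bu _ k).
  have [a [a1 ca]] := SEP _ _ hl.
  have hb : forall k, `|crd (psub (u (i0 + l1)%N) (u (i0 + l2)%N)) k| <= c / (2 * n.+1%:R).
    by move=> k; rewrite crd_psub; apply: ltW; exact: cl.
  have := dotp_le (pnorm1_crd a1) hb.
  have -> : n.+1%:R * (c / (2 * n.+1%:R)) = c / 2 :> R.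
    by field; rewrite gt_eqF //; have := ler0n R n; lra.
  lra.
have kk_const a b : (a <= b)%N ->
    (forall l, (a <= l)%N -> (l < b)%N -> ~ step4 l) -> kk b = kk a.
  elim: b => [|b IH] hab H; first by move: hab; rewrite leqn0 => /eqP ->.
  case: (eqVneq a b.+1) => [->//|ne].
  have hab' : (a <= b)%N by clear - hab ne; lia.
  rewrite (proj2 (Hit_n4 b (H b hab' (ltnSn b)))) IH // => l h1 h2.
  by apply: H => //; exact: ltnW h2.
have MIN a : exists i, [/\ (a <= i)%N, step4 i & kk i = kk a].
  have ex : exists i, (a <= i)%N && `[< step4 i >].
    by have [i [h1 h2]] := INF a; exists i; rewrite h1; apply/asboolP.
  case: (ex_minnP ex) => i /andP[h1 /asboolP h2] hmin.
  exists i; split => //; apply: kk_const => // l hl hli s4.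
  have : (a <= l)%N && `[< step4 l >] by rewrite hl; apply/asboolP.
  by move=> /hmin; rewrite leqNgt hli.
have CL1 k : exists i, kk i = k /\ step4 i.
  elim: k => [|k [i [ki si]]].
    by have [i [_ s e]] := MIN 0%N; exists i; rewrite e Hkk0.
  have [i' [_ s e]] := MIN i.+1; exists i'; split => //.
  by rewrite e Hit_4 // ki.
have [L L0 HL] := LIP fcv r0.
have q0 : 0 < q by lra.
have BND k : delta k <= q^-1 ->
    `|gs - (f (x k) + eps)| <= (1 + L) * q * delta k /\
    `|gs - sigma k| <= (1 + L) * q * delta k.
  move=> hdk; have [i [ki si]] := CL1 k.
  have [[Mu Gu gbu umin uneq] [H2 [_ [_ [_ [_ [H4 _]]]]]]] := Hit i.
  have [sk [Gx [gx _]]] := H4 si.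
  have [j hj] := si.
  rewrite ki in sk Gx gx hj.
  have [_ [_ [/andP[qq1 qq2] EW]]] := H2 j.
  set U := u i; set Wp := pcomb (u i) (ubar i j) (qq i j).
  set e := q * delta k.
  have dk0 := dpos k.
  have e0 : 0 <= e by rewrite mulr_ge0 // ltW.
  have e1 : e <= 1.
    by rewrite /e -(mulfV (lt0r_neq0 q0)) ler_wpM2l // ltW.
  have hc k' : `|crd U k' - crd Wp k'| <= e.
    rewrite /Wp crd_pcomb.
    have -> : crd U k' - (crd U k' + qq i j * (crd (ubar i j) k' - crd U k')) =
      - (qq i j * crd (psub (ubar i j) (u i)) k') by rewrite crd_psub; ring.
    rewrite normrN normrM ger0_norm; last by lra.
    apply: ler_pM => //; first by lra.
    exact: le_trans (crd_le_pnorm _ _) hj.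
  have n1 : `|U.1 - Wp.1| <= e.
    apply: mx_norm_le => // i'; have := hc (lift ord_max i'); rewrite !crd_lift.
    by apply: le_trans; rewrite !mxE.
  have n2 : `|U.2 - Wp.2| <= e by have := hc ord_max; rewrite !crd_max.
  have lip := HL U.1 Wp.1 (F_u1 i) (le_trans n1 e1).
  have lip2 : L * `|U.1 - Wp.1| <= L * e by rewrite ler_wpM2l.
  have EW' : f Wp.1 + eps <= Wp.2 by exact: EW.
  have Dx : D (x k) by exact: HG0D _ (F_G i _ Gx).
  have g1 := F_g _ Dx.
  have g2 := F_g _ (F_uD i).
  have /andP[_ u2] := F_u2 i.
  have -> : (1 + L) * q * delta k = e + L * e by rewrite /e; ring.
  have l3 : f U.1 <= f Wp.1 + L * e by apply: le_trans lip _; rewrite lerD2l.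
  have g2' : gs <= f U.1 + eps := g2.
  have u2' : U.2 <= gs := u2.
  have sk' : sigma k = U.2 := sk.
  move: n2; rewrite ler_norml => /andP[n2a n2b].
  have gx' : f (x k) + eps <= f U.1 + eps := gx.
  clear -gx' l3 g2' u2' sk' n2a n2b EW' g1.
  move: (L * e) l3 => Le l3.
  by split; rewrite ler_norml; apply/andP; split; rewrite ?sk'; lra.
have L1 : 0 < 1 + L by lra.
have limit (s : nat -> R) : (forall k, delta k <= q^-1 -> `|gs - s k| <= (1 + L) * q * delta k) ->
    s @ \oo --> gs.
  move=> Hs; apply/cvgrPdist_le => e0 e00.
  set e1 := Num.min q^-1 (e0 / ((1 + L) * q)).
  have e10 : 0 < e1 by rewrite lt_min invr_gt0 q0 /= divr_gt0 // mulr_gt0.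
  move/cvgrPdist_le: dcv => /(_ e1 e10).
  apply: filterS => k; rewrite sub0r normrN (ger0_norm (ltW (dpos k))) le_min => /andP[h1 h2].
  apply: le_trans (Hs k h1) _.
  by rewrite -ler_pdivlMl ?mulr_gt0 // mulrC.
split.
  by move=> k; have [i [ki si]] := CL1 k; exists i.
split; apply: limit => k hk; have := BND k hk; case=> //.
Qed.
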